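(* Let ${\bm{x}}_i^m\in\mathbb{R}^d$ ($m\in[M]$, $i\in[n]$) satisfy $\|{\bm{x}}_i^m\|\le1$ and be linearly separable. Let $\ell(z)=\log(1+e^{-z})$, $F_m({\bm{w}})=\frac1n\sum_i\ell(\langle{\bm{w}},{\bm{x}}_i^m\rangle)$, $F=\frac1M\sum_mF_m$. Run Local GD with any ${\bm{w}}_0$, $\eta>0$, $K\in\mathbb{N}$: ${\bm{w}}_{r,0}^m={\bm{w}}_r$, ${\bm{w}}_{r,k+1}^m={\bm{w}}_{r,k}^m-\eta\nabla F_m({\bm{w}}_{r,k}^m)$ ($k=0,\dots,K-1$), ${\bm{w}}_{r+1}=\frac1M\sum_m{\bm{w}}_{r,K}^m$. If $F({\bm{w}}_r)\le1/(\eta KM)$ for some $r\ge0$, then $\|{\bm{w}}_{r,k}^m-{\bm{w}}_r\|\le1$ for every $m\in[M]$ and $k\in[K]$.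
   Context: Linear separability means there is ${\bm{w}}$ with $\langle{\bm{w}},{\bm{x}}_i^m\rangle>0$ for all $m,i$ (labels absorbed into data). $[K]=\{1,\dots,K\}$. *)

(* Defs.v *)
From mathcomp Require Import all_boot all_order all_algebra.
From mathcomp Require Import all_classical all_reals all_analysis.
Set Implicit Arguments. Unset Strict Implicit. Unset Printing Implicit Defensive.
Import Order.TTheory GRing.Theory Num.Theory.
Local Open Scope ring_scope.

Section LocalGD.
Variable R : realType.

Definition inner (d : nat) (u v : 'rV[R]_d) : R := \sum_(j < d) u ord0 j * v ord0 j.
Definition enorm (d : nat) (u : 'rV[R]_d) : R := Num.sqrt (inner u u).

Definition logistic (z : R) : R := ln (1 + expR (- z)).

Variables (d M n : nat) (x : 'I_M -> 'I_n -> 'rV[R]_d).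

Definition linsep : Prop := exists w : 'rV[R]_d, forall m i, 0 < inner w (x m i).

Definition Fm (m : 'I_M) (w : 'rV[R]_d) : R :=
  n%:R^-1 * \sum_(i < n) logistic (inner w (x m i)).
Definition Fobj (w : 'rV[R]_d) : R := M%:R^-1 * \sum_(m < M) Fm m w.

Definition gradFm (m : 'I_M) (w : 'rV[R]_d) : 'rV[R]_d :=
  n%:R^-1 *: \sum_(i < n) ((derive1 logistic (inner w (x m i))) *: x m i).

Definition local_iter (eta : R) (m : 'I_M) (w : 'rV[R]_d) (k : nat) : 'rV[R]_d :=
  iter k (fun v => v - eta *: gradFm m v) w.

Definition round (eta : R) (K : nat) (w : 'rV[R]_d) : 'rV[R]_d :=
  M%:R^-1 *: \sum_(m < M) local_iter eta m w K.

Definition global_iter (eta : R) (K : nat) (w0 : 'rV[R]_d) (r : nat) : 'rV[R]_d :=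
  iter r (round eta K) w0.

End LocalGD.

(* Main.v *)
Require Import Defs.
From mathcomp Require Import all_boot all_order all_algebra.
From mathcomp Require Import all_classical all_reals all_analysis.
From mathcomp Require Import ring lra.
Import Order.TTheory GRing.Theory Num.Theory.
Local Open Scope ring_scope.

Section Vec.
Variables (R : realType) (d : nat).
Implicit Types (u v w : 'rV[R]_d) (a b : R).

Lemma innerC u v : inner u v = inner v u.
Proof. by apply: eq_bigr => j _; rewrite mulrC. Qed.

Lemma innerDl u v w : inner (u + v) w = inner u w + inner v w.
Proof. by rewrite /inner -big_split; apply: eq_bigr => j _; rewrite mxE mulrDl. Qed.

Lemma innerZl a u v : inner (a *: u) v = a * inner u v.
Proof. by rewrite /inner mulr_sumr; apply: eq_bigr => j _; rewrite mxE mulrA. Qed.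

Lemma innerNl u v : inner (- u) v = - inner u v.
Proof. by rewrite -scaleN1r innerZl mulN1r. Qed.

Lemma innerBl u v w : inner (u - v) w = inner u w - inner v w.
Proof. by rewrite innerDl innerNl. Qed.

Lemma innerDr u v w : inner w (u + v) = inner w u + inner w v.
Proof. by rewrite innerC innerDl !(innerC w). Qed.

Lemma innerZr a u v : inner v (a *: u) = a * inner v u.
Proof. by rewrite innerC innerZl innerC. Qed.

Lemma innerBr u v w : inner w (u - v) = inner w u - inner w v.
Proof. by rewrite innerC innerBl !(innerC w). Qed.

Lemma inner0l v : inner 0 v = 0.
Proof. by rewrite -(scale0r 0) innerZl mul0r. Qed.

Lemma inner_suml n (f : 'I_n -> 'rV[R]_d) v :
  inner (\sum_(i < n) f i) v = \sum_(i < n) inner (f i) v.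
Proof.
rewrite /inner (exchange_big _ _ _ _ _ (fun i j => f i ord0 j * v ord0 j)).
by apply: eq_bigr => j _; rewrite summxE mulr_suml.
Qed.

Lemma inner_ge0 u : 0 <= inner u u.
Proof. by apply: sumr_ge0 => j _; rewrite -expr2 sqr_ge0. Qed.

Lemma CS u v : inner u v ^+ 2 <= inner u u * inner v v.
Proof.
have [a0|apos] := eqVneq (inner u u) 0.
  have u0 : forall j, u ord0 j = 0.
    move=> j; have h : forall k : 'I_d, true -> 0 <= u ord0 k * u ord0 k.
      by move=> k _; rewrite -expr2 sqr_ge0.
    have := @psumr_eq0P _ _ predT (fun j => u ord0 j * u ord0 j) h a0 j isT.
    by move/eqP; rewrite mulf_eq0 orbb => /eqP.
  have -> : inner u v = 0 by rewrite /inner big1 // => j _; rewrite u0 mul0r.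
  by rewrite a0 expr0n /= mul0r.
have agt : 0 < inner u u by rewrite lt0r apos inner_ge0.
set a := inner u u; set b := inner u v; set c := inner v v.
have := inner_ge0 (a *: v - b *: u).
rewrite !(innerBl, innerBr, innerZl, innerZr) -/a -/b -/c (innerC v u) -/b => h.
have : 0 <= a * (a * c - b ^+ 2).
  by move: h; rewrite expr2; congr (0 <= _); ring.
by rewrite pmulr_rge0 // subr_ge0 mulrC.
Qed.

Lemma enorm_ge0 u : 0 <= enorm u.
Proof. exact: sqrtr_ge0. Qed.

Lemma enorm_sq u : enorm u ^+ 2 = inner u u.
Proof. by rewrite sqr_sqrtr // inner_ge0. Qed.

Lemma inner_le u v : `|inner u v| <= enorm u * enorm v.
Proof.
rewrite -sqrtr_sqr /enorm -sqrtrM ?inner_ge0 // ler_sqrt ?CS //.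
by rewrite mulr_ge0 ?inner_ge0.
Qed.

Lemma enormZ a u : enorm (a *: u) = `|a| * enorm u.
Proof.
by rewrite /enorm innerZl innerZr mulrA -expr2 sqrtrM ?sqr_ge0 // sqrtr_sqr.
Qed.

Lemma enorm0 : enorm (0 : 'rV[R]_d) = 0.
Proof. by rewrite /enorm inner0l sqrtr0. Qed.

Lemma enormD u v : enorm (u + v) <= enorm u + enorm v.
Proof.
rewrite {1}/enorm -[enorm u + enorm v]ger0_norm ?addr_ge0 ?enorm_ge0 //.
rewrite -sqrtr_sqr ler_sqrt ?sqr_ge0 //.
rewrite !(innerDl, innerDr) sqrrD !enorm_sq (innerC v u).
have := inner_le u v; have := ler_norm (inner u v); lra.
Qed.

Lemma enorm_sum n (f : 'I_n -> 'rV[R]_d) :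
  enorm (\sum_(i < n) f i) <= \sum_(i < n) enorm (f i).
Proof.
elim/big_ind2: _ => [|x1 x2 y1 y2 h1 h2|i _]; first by rewrite enorm0.
  by apply: le_trans (enormD _ _) _; exact: lerD.
by [].
Qed.
End Vec.
Arguments enorm_sum {R d n}.
Arguments inner_le {R d}.
Arguments CS {R d}.

Section S.
Variable R : realType.

Definition sg (z : R) : R := expR (- z) / (1 + expR (- z)).

Lemma derive_logistic (z : R) : derive1 (@logistic R) z = - sg z.
Proof.
have h1 : is_derive z 1 (fun z : R => expR (- z)) (expR (- z) * (-1)).
  exact: (@is_derive1_comp _ expR (fun z => - z) z).
have h2 : is_derive z 1 (fun z : R => 1 + expR (- z)) (expR (- z) * (-1)).
  have := @is_deriveD R R^o R^o (fun _ => 1) (fun z : R => expR (- z)) z 1 0 _ _ h1.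
  move=> /(_ (is_derive_cst _ _ _)); rewrite add0r; exact.
have hp : 0 < 1 + expR (- z) by rewrite addr_gt0 ?expR_gt0.
have h3 : is_derive z 1 (@ln R \o (fun z : R => 1 + expR (- z))) ((1 + expR (- z))^-1 * (expR (- z) * (-1))).
  apply: is_derive1_comp; exact: is_derive1_ln.
rewrite derive1E.
have -> : (@logistic R) = @ln R \o (fun z : R => 1 + expR (- z)) by [].
rewrite derive_val /sg mulrN1 mulrN mulrC //.
Qed.

Lemma sg_ge0 (z : R) : 0 <= sg z.
Proof. by rewrite /sg divr_ge0 ?addr_ge0 ?expR_ge0. Qed.

Lemma ln_ge1V (y : R) : 0 < y -> 1 - y^-1 <= ln y.
Proof.
move=> y0; have := @le_ln1Dx R (y^-1 - 1).
rewrite [1 + _]addrC subrK lnV ?posrE // => h.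
have : - ln y <= y^-1 - 1 by apply: h; rewrite ltrBrDl subrr invr_gt0.
lra.
Qed.

Lemma logistic_ge0 (z : R) : 0 <= logistic z.
Proof. by rewrite /logistic ln_ge0 // lerDl expR_ge0. Qed.

Lemma sg_le (z : R) : sg z <= logistic z.
Proof.
set t := expR (- z); have t0 : 0 < t by exact: expR_gt0.
have p0 : 0 < 1 + t by rewrite addr_gt0.
have := ln_ge1V _ p0.
have -> : 1 - (1 + t)^-1 = t / (1 + t) by field; rewrite gt_eqF.
by rewrite /logistic /sg.
Qed.

Lemma expR_quad (u : R) : u <= 2^-1 -> expR u <= 1 + u + 2 * u ^+ 2.
Proof.
move=> hu.
have h1 : 1 - u <= expR (- u) by have := expR_ge1Dx (- u).
have h2 : expR u * expR (- u) = 1 by rewrite -expRD subrr expR0.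
have e0 := expR_gt0 u.
have h3 : expR u * (1 - u) <= 1 by have := ler_wpM2l (ltW e0) h1; rewrite h2.
have h4 : 0 <= u ^+ 2 * (1 - 2 * u) by rewrite mulr_ge0 ?sqr_ge0 //; lra.
have h5 : 0 < 1 - u by lra.
have : (expR u - (1 + u + 2 * u ^+ 2)) * (1 - u) <= 0.
  have -> : (expR u - (1 + u + 2 * u ^+ 2)) * (1 - u) =
     expR u * (1 - u) - 1 - u ^+ 2 * (1 - 2 * u) by rewrite expr2; ring.
  lra.
rewrite pmulr_lle0 // subr_le0 //.
Qed.

Lemma key (z del : R) : - del <= 2^-1 ->
  logistic (z + del) <= logistic z - sg z * del + 2 * sg z * del ^+ 2.
Proof.
move=> hd.
set t := expR (- z); have t0 : 0 < t by exact: expR_gt0.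
set q := expR (- del); have q0 : 0 < q by exact: expR_gt0.
have p0 : 0 < 1 + t by rewrite addr_gt0.
have pq0 : 0 < 1 + t * q by rewrite addr_gt0 ?mulr_gt0.
have e1 : logistic (z + del) = ln (1 + t * q) by rewrite /logistic opprD expRD.
have e2 : ln (1 + t * q) = ln (1 + t) + ln ((1 + t * q) / (1 + t)).
  rewrite ln_div ?posrE ?divr_gt0 //; lra.
have hl : ln ((1 + t * q) / (1 + t)) <= (1 + t * q) / (1 + t) - 1.
  have := @le_ln1Dx R ((1 + t * q) / (1 + t) - 1); rewrite [1 + (_ - 1)]addrC subrK; apply.
  by rewrite ltrBrDl subrr divr_gt0.
have e3 : (1 + t * q) / (1 + t) - 1 = sg z * (q - 1).
  by rewrite /sg -/t; field; rewrite gt_eqF.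
have hq : q - 1 <= - del + 2 * del ^+ 2.
  by have := expR_quad _ hd; rewrite /q sqrrN; lra.
have := sg_ge0 z; rewrite e1 e2 => hs.
rewrite /logistic -/t.
have := ler_wpM2l hs hq; rewrite -e3; lra.
Qed.
End S.

Arguments sg {R}.

Section Main.
Variables (R : realType) (d M n : nat) (x : 'I_M -> 'I_n -> 'rV[R]_d).
Hypothesis hx : forall m i, enorm (x m i) <= 1.

Lemma grad_eq m w : gradFm x m w =
  n%:R^-1 *: \sum_(i < n) (- sg (inner w (x m i))) *: x m i.
Proof. by rewrite /gradFm; congr (_ *: _); apply: eq_bigr => i _; rewrite derive_logistic. Qed.

Lemma Fm_ge0 m w : 0 <= Fm x m w.
Proof. by rewrite /Fm mulr_ge0 ?invr_ge0 ?ler0n ?sumr_ge0 // => i _; exact: logistic_ge0. Qed.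

Lemma grad_le m w : enorm (gradFm x m w) <= Fm x m w.
Proof.
rewrite grad_eq enormZ ger0_norm ?invr_ge0 ?ler0n //.
apply: ler_wpM2l; first by rewrite invr_ge0 ler0n.
apply: le_trans (enorm_sum _) _; apply: ler_sum => i _.
rewrite enormZ normrN ger0_norm ?sg_ge0 //.
apply: le_trans (sg_le _ _); rewrite -[leRHS]mulr1.
by apply: ler_wpM2l; [exact: sg_ge0 | exact: hx].
Qed.

Lemma gg_eq m w : inner (gradFm x m w) (gradFm x m w) =
  - (n%:R^-1 * \sum_(i < n) sg (inner w (x m i)) * inner (gradFm x m w) (x m i)).
Proof.
rewrite {1}grad_eq innerZl inner_suml -mulrN; congr (_ * _); rewrite -sumrN.
by apply: eq_bigr => i _; rewrite innerZl (innerC _ _ (x m i)) mulNr.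
Qed.

Lemma descent m w (eta : R) : 0 < eta -> eta * Fm x m w <= 2^-1 ->
  Fm x m (w - eta *: gradFm x m w) <= Fm x m w.
Proof.
move=> he hF.
set g := gradFm x m w; set F := Fm x m w; set gg := inner g g.
have hF' : eta * F <= 2^-1 by exact: hF.
have gg0 : 0 <= gg by exact: inner_ge0.
have hg : enorm g <= F by exact: grad_le.
have hi : forall i, logistic (inner (w - eta *: g) (x m i)) <=
   logistic (inner w (x m i)) + eta * (sg (inner w (x m i)) * inner g (x m i))
   + 2 * eta ^+ 2 * (logistic (inner w (x m i)) * gg).
  move=> i; set z := inner w (x m i); set a := inner g (x m i).
  have -> : inner (w - eta *: g) (x m i) = z + - (eta * a) by rewrite innerBl innerZl.
  have ha : `|a| <= F.
    apply: le_trans (inner_le _ _) _; apply: le_trans hg.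
    rewrite -[leRHS]mulr1; apply: ler_wpM2l; [exact: enorm_ge0 | exact: hx].
  have hc : - - (eta * a) <= 2^-1.
    rewrite opprK; apply: le_trans hF; apply: ler_wpM2l; first exact: ltW.
    exact: le_trans (ler_norm _) ha.
  apply: le_trans (key _ _ _ hc) _.
  have hsa : sg z * a ^+ 2 <= logistic z * gg.
    have a2 : a ^+ 2 <= gg.
      apply: le_trans (CS _ _) _; rewrite -(enorm_sq _ _ (x m i)) -[leRHS]mulr1.
      apply: ler_wpM2l => //; rewrite -[1](expr1n _ 2); apply: lerXn2r;
        rewrite ?nnegrE ?enorm_ge0 ?hx //.
    apply: le_trans (ler_wpM2l (sg_ge0 _ _) a2) _.
    by apply: ler_wpM2r => //; exact: sg_le.
  have E : logistic z - sg z * (- (eta * a)) + 2 * sg z * (- (eta * a)) ^+ 2 =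
     logistic z + eta * (sg z * a) + 2 * eta ^+ 2 * (sg z * a ^+ 2) by ring.
  rewrite E lerD2l; apply: ler_wpM2l => //.
  by rewrite mulr_ge0 ?exprn_ge0 // ltW.
set L := \sum_(i < n) logistic (inner w (x m i)).
set B := \sum_(i < n) sg (inner w (x m i)) * inner g (x m i).
have hs : \sum_(i < n) logistic (inner (w - eta *: g) (x m i)) <=
    L + eta * B + 2 * eta ^+ 2 * (L * gg).
  apply: le_trans (ler_sum _ (fun i _ => hi i)) _.
  by rewrite !big_split /= /L /B -!mulr_sumr -mulr_suml.
have hn : 0 <= (n%:R : R)^-1 by rewrite invr_ge0 ler0n.
have h1 := ler_wpM2l hn hs.
have eF : n%:R^-1 * (L + eta * B + 2 * eta ^+ 2 * (L * gg)) =
   F + eta * (n%:R^-1 * B) + 2 * eta ^+ 2 * gg * F by rewrite /F /Fm -/L; ring.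
have eB : n%:R^-1 * B = - gg by rewrite /gg gg_eq opprK.
have hp : 0 <= eta * gg * (1 - 2 * eta * F).
  by rewrite !mulr_ge0 ?(ltW he) //; lra.
have e2 : eta * gg * (1 - 2 * eta * F) = eta * gg - 2 * eta ^+ 2 * gg * F by ring.
rewrite /Fm -/g; move: h1; rewrite eF eB -/F; lra.
Qed.
End Main.

Theorem lemma4p7 (R : realType) (d M n : nat) (x : 'I_M -> 'I_n -> 'rV[R]_d)
  (hx : forall m i, enorm (x m i) <= 1) (hsep : linsep x)
  (w0 : 'rV[R]_d) (eta : R) (heta : 0 < eta) (K r : nat)
  (hF : Fobj x (global_iter x eta K w0 r) <= (eta * K%:R * M%:R)^-1) :
  forall (m : 'I_M) (k : nat), (1 <= k <= K)%N ->
    enorm (local_iter x eta m (global_iter x eta K w0 r) k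
           - global_iter x eta K w0 r) <= 1.
Proof.
move=> m k /andP [k1 kK].
move: hF; set w := global_iter x eta K w0 r => hF.
have M0 : (0 < M)%N := leq_ltn_trans (leq0n m) (ltn_ord m).
have K0 : (0 < K)%N := leq_trans k1 kK.
set F0 := Fm x m w.
have F00 : 0 <= F0 by exact: Fm_ge0.
have hF0 : F0 <= M%:R * Fobj x w.
  rewrite /Fobj mulrA mulfV ?pnatr_eq0 -?lt0n // mul1r (bigD1 m) //= lerDl.
  by apply: sumr_ge0 => i _; exact: Fm_ge0.
have pos : 0 < eta * K%:R * M%:R by rewrite !mulr_gt0 // ltr0n.
have hK : eta * K%:R * F0 <= 1.
  have := ler_wpM2l (ltW pos) hF; rewrite mulfV ?gt_eqF // => h.
  apply: le_trans h.
  have hk0 : 0 <= eta * K%:R by rewrite mulr_ge0 ?ler0n // ltW.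
  by apply: le_trans (ler_wpM2l hk0 hF0) _; rewrite mulrA.
have claim1 : forall j, (j < K)%N -> Fm x m (local_iter x eta m w j) <= F0.
  elim=> [|j IH] hj; first by [].
  have IHj := IH (ltnW hj).
  have K2 : 2%:R <= K%:R :> R by rewrite ler_nat; apply: leq_ltn_trans hj.
  have h2 : eta * Fm x m (local_iter x eta m w j) <= 2^-1.
    have e0 : 0 <= eta * F0 by rewrite mulr_ge0 // ltW.
    have : eta * F0 * 2%:R <= 1.
      apply: le_trans hK; rewrite mulrAC; apply: ler_wpM2r => //.
      by apply: ler_wpM2l => //; exact: ltW.
    have : eta * Fm x m (local_iter x eta m w j) <= eta * F0.
      by apply: ler_wpM2l => //; exact: ltW.
    lra.
  apply: le_trans IHj; rewrite /local_iter /=.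
  exact: (@descent _ _ _ _ _ hx).
have claim2 : forall j, (j <= K)%N ->
    enorm (local_iter x eta m w j - w) <= j%:R * (eta * F0).
  elim=> [|j IH] hj.
    by rewrite /local_iter /= subrr enorm0 mul0r.
  have IHj := IH (ltnW hj).
  have hF1 := claim1 j hj.
  rewrite /local_iter /= -/(local_iter x eta m w j).
  have -> : local_iter x eta m w j - eta *: gradFm x m (local_iter x eta m w j) - w
     = (local_iter x eta m w j - w) + (- eta) *: gradFm x m (local_iter x eta m w j).
    by rewrite scaleNr addrAC.
  apply: le_trans (enormD _ _ _ _) _.
  rewrite enormZ normrN gtr0_norm // -[j.+1]addn1 natrD mulrDl mul1r.
  apply: lerD => //; apply: ler_wpM2l; first exact: ltW.
  apply: le_trans hF1; exact: grad_le.
apply: le_trans (claim2 k kK) _.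
apply: le_trans hK; rewrite mulrCA mulrA; apply: ler_wpM2r => //.
by apply: ler_wpM2l; [exact: ltW | rewrite ler_nat].
Qed.
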